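(* If $q$ is a power of an odd prime, then $\chi(G_{q^3})\le 6q^2$; consequently $\chi(ER_{q^3})\le 6q^2+1$.
   Context: For a power $Q$ of an odd prime, the graph $G_Q$ has vertex set $\mathbb{F}_Q\times\mathbb{F}_Q$, and distinct vertices $(x_1,x_2)$, $(y_1,y_2)$ are adjacent if and only if $(x_1+y_1)^2=x_2+y_2$; $G_Q$ has no loops. $ER_Q$ is the graph whose vertices are the $1$-dimensional subspaces of $\mathbb{F}_Q^3$, where distinct vertices $(x_0,x_1,x_2)$, $(y_0,y_1,y_2)$ (homogeneous coordinates) are adjacent if and only if $x_0y_0+x_1y_1+x_2y_2=0$. $\chi$ denotes the chromatic number. *)

(* Defs.v *)
From HB Require Import structures.
From mathcomp Require Import all_boot all_order all_algebra all_field.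
Set Implicit Arguments. Unset Strict Implicit. Unset Printing Implicit Defensive.
Import GRing.Theory.
Local Open Scope ring_scope.

Definition colorable (T : finType) (e : rel T) (n : nat) : bool :=
  [exists f : {ffun T -> 'I_n},
     [forall x : T, forall y : T, ((x != y) && e x y) ==> (f x != f y)]].

Lemma colorable_card (T : finType) (e : rel T) : exists n, colorable e n.
Proof.
exists #|T|; apply/existsP; exists [ffun x => enum_rank x].
apply/forallP => x; apply/forallP => y; apply/implyP => /andP [xy _].
rewrite !ffunE; apply: contra xy => /eqP /enum_rank_inj ->; exact: eqxx.
Qed.

Definition chromatic_number (T : finType) (e : rel T) : nat :=
  ex_minn (colorable_card e).

Definition G_adj (F : finFieldType) : rel (F * F) :=
  fun x y => (x != y) && ((x.1 + y.1) ^+ 2 == x.2 + y.2).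

(* ER_Q : vertices are the 1-dimensional subspaces of F^3, each represented
   as the set of its vectors {c v | c in F} for some nonzero v. *)
Definition is_line (F : finFieldType) (A : {set 'rV[F]_3}) : bool :=
  [exists v : 'rV[F]_3, (v != 0) && (A == [set c *: v | c in F])].

Definition ER_vertex (F : finFieldType) := {A : {set 'rV[F]_3} | is_line A}.

Definition dot3 (F : finFieldType) (u w : 'rV[F]_3) : F :=
  \sum_(i < 3) u 0 i * w 0 i.

Definition ER_adj (F : finFieldType) : rel (ER_vertex F) :=
  fun A B => (A != B) &&
    [forall u : 'rV[F]_3, forall w : 'rV[F]_3,
       ((u \in val A) && (w \in val B)) ==> (dot3 u w == 0)].

(* Main.v *)
Require Import Defs.
From HB Require Import structures.
From mathcomp Require Import all_boot all_order all_algebra all_field.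
From mathcomp Require Import zify ring.
Set Implicit Arguments. Unset Strict Implicit. Unset Printing Implicit Defensive.
Import GRing.Theory.
Local Open Scope ring_scope.

Definition Kset (F : finFieldType) (q : nat) : {set F} := [set z : F | z ^+ q == z].

Section KS.
Context (F : finFieldType) (p k : nat) (pc : p \in [pchar F]).
Local Notation q := (p ^ k)%N.
Local Notation K := (Kset F q).

Lemma pnq : [pchar F].-nat q.
Proof. by rewrite pnatX (pnatE _ (pcharf_prime pc)) pc. Qed.

Lemma K_add x y : x \in K -> y \in K -> x + y \in K.
Proof. by rewrite !inE exprDn_pchar ?pnq // => /eqP -> /eqP ->. Qed.
Lemma K_opp x : x \in K -> - x \in K.
Proof. by rewrite !inE exprNn_pchar ?pnq // => /eqP ->. Qed.
Lemma K_sub x y : x \in K -> y \in K -> x - y \in K.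
Proof. by move=> hx hy; apply: K_add => //; apply: K_opp. Qed.
Lemma K_mul x y : x \in K -> y \in K -> x * y \in K.
Proof. by rewrite !inE exprMn => /eqP -> /eqP ->. Qed.
Lemma K_inv x : x \in K -> x^-1 \in K.
Proof. by rewrite !inE exprVn => /eqP ->. Qed.
Lemma K_1 : 1 \in K.
Proof. by rewrite inE expr1n. Qed.
Lemma K_0 : (0 < k)%N -> 0 \in K.
Proof.
move=> k0; rewrite inE expr0n expn_eq0.
by rewrite (gtn_eqF (prime_gt0 (pcharf_prime pc))).
Qed.
End KS.

Section KS2.
Context (F : finFieldType) (p k : nat) (pc : p \in [pchar F]) (k0 : (0 < k)%N)
  (cardF : #|F| = ((p ^ k) ^ 3)%N) (two : (2 : F) != 0).
Local Notation q := (p ^ k)%N.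
Local Notation K := (Kset F q).

Lemma q3E : (q ^ 3 = q * q * q)%N.
Proof. by rewrite !expnS expn0 muln1 mulnA. Qed.

Lemma z_q3 (z : F) : ((z ^+ q) ^+ q) ^+ q = z.
Proof. by rewrite -!exprM mulnA -q3E -cardF expf_card. Qed.

Lemma eq_opp_self (z : F) : - z = z -> z = 0.
Proof.
move=> h; have : z * 2 = 0 by rewrite mulrDr mulr1 -{1}h addNr.
by move/eqP; rewrite mulf_eq0 (negbTE two) orbF => /eqP.
Qed.

Lemma K_sq z : z ^+ 2 \in K -> z \in K.
Proof.
rewrite !inE -exprM mulnC exprM => /eqP h.
have : (z ^+ q - z) * (z ^+ q + z) = 0.
  by rewrite -subr_sqr h subrr.
move/eqP; rewrite mulf_eq0 subr_eq0 => /orP [//|].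
rewrite addr_eq0 => /eqP hz.
have e : (- z) ^+ q = z.
  rewrite exprNn_pchar; last exact: pnq pc.
  by apply/eqP; rewrite eqr_oppLR; apply/eqP; exact: hz.
by have := z_q3 z; rewrite hz e hz => ->.
Qed.
End KS2.

Lemma card_roots_lt (F : finFieldType) (P : {poly F}) :
  P != 0 -> (#|[set z | root P z]| < size P)%N.
Proof.
move=> P0; rewrite cardE; apply: max_poly_roots => //; last exact: enum_uniq.
by apply/allP => z; rewrite mem_enum inE.
Qed.

Section KS3.
Context (F : finFieldType) (p k : nat) (pc : p \in [pchar F]) (k0 : (0 < k)%N)
  (cardF : #|F| = ((p ^ k) ^ 3)%N) (two : (2 : F) != 0).
Local Notation q := (p ^ k)%N.
Local Notation K := (Kset F q).

Lemma q_gt1 : (1 < q)%N.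
Proof.
have p1 := prime_gt1 (pcharf_prime pc).
by rewrite (leq_trans p1) // -{1}(expn1 p) leq_pexp2l // ltnW.
Qed.

Lemma K_card_le : (#|K| <= q)%N.
Proof.
have q1 := q_gt1.
have sz : size ('X^q - 'X : {poly F}) = q.+1.
  by rewrite size_addl size_polyXn // size_opp size_polyX.
have nz : ('X^q - 'X : {poly F}) != 0 by rewrite -size_poly_gt0 sz.
have := card_roots_lt nz; rewrite sz ltnS; apply: leq_trans.
apply: subset_leq_card; apply/subsetP => z; rewrite !inE rootE !hornerE.
by rewrite subr_eq0.
Qed.

Lemma nat_id1 (q' : nat) : (1 < q')%N -> ((q' - 1) * (q' * q' + q' + 1) = q' ^ 3 - 1)%N.
Proof. move=> h. rewrite (_ : q' ^ 3 = q' * q' * q')%N; last by rewrite !expnS expn0 muln1 mulnA. nia. Qed.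
Lemma nat_id2 (q' K' : nat) : (1 < q')%N -> (q' ^ 3 <= K' + (q' - 1) * (q' * q' + q'))%N -> (q' <= K')%N.
Proof. move=> h. rewrite (_ : q' ^ 3 = q' * q' * q')%N; last by rewrite !expnS expn0 muln1 mulnA. nia. Qed.

Lemma unit_pow (z : F) : z != 0 -> z ^+ (#|F| - 1) = 1.
Proof.
move=> z0; have c0 : (0 < #|F|)%N by apply/card_gt0P; exists 0.
apply: (mulIf z0); rewrite mul1r -exprSr subn1 prednK //; exact: expf_card.
Qed.

Lemma K_card_ge : (q <= #|K|)%N.
Proof.
have q1 := q_gt1.
pose m := (q * q + q + 1)%N.
pose C : {poly F} := \sum_(i < m) 'X^((q - 1) * i).
have szC : (size C <= (q - 1) * (q * q + q) + 1)%N.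
  apply: (leq_trans (size_sum _ _ _)); apply/bigmax_leqP => i _.
  rewrite size_polyXn addn1 ltnS leq_mul2l; apply/orP; right.
  by case: i => i /=; rewrite /m addn1 ltnS.
have hC z : C.[z] = \sum_(i < m) (z ^+ (q - 1)) ^+ i.
  by rewrite horner_sum; apply: eq_bigr => i _; rewrite hornerXn exprM.
have C0 : C != 0.
  apply/negP => /eqP C0; have := hC 0; rewrite C0 horner0.
  rewrite /m addn1 big_ord_recl expr0 big1 ?addr0; first by move/eqP; rewrite eq_sym oner_eq0.
  move=> i _; rewrite -exprM expr0n /= muln_eq0 subn_eq0 leqNgt q1 /=; done.
have rootC z : z \notin K -> root C z.
  move=> zK; have z0 : z != 0 by apply: contraNneq zK => ->; exact: K_0.
  set w := z ^+ (q - 1).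
  have w1 : w != 1.
    apply: contraNneq zK => w1; rewrite inE.
    have e : z ^+ q = z * w by rewrite /w -exprS subn1 prednK // ltnW.
    by rewrite e w1 mulr1.
  have wm : w ^+ m = 1 by rewrite -exprM nat_id1 // -cardF unit_pow.
  have := subrX1 w m; rewrite wm subrr => /esym/eqP; rewrite mulf_eq0 subr_eq0 (negbTE w1) /=.
  by rewrite rootE hC.
have sub : [set: F] \subset K :|: [set z | root C z].
  apply/subsetP => z _; rewrite in_setU; case: (boolP (z \in K)) => //= zK.
  by rewrite inE rootC.
have := subset_leq_card sub; rewrite cardsT cardF => h.
apply: (nat_id2 q1); apply: (leq_trans h); apply: (leq_trans (leq_card_setU _ _)).
rewrite leq_add2l; have h2 := card_roots_lt C0.
rewrite addn1 in szC; rewrite -ltnS; apply: (leq_trans _ szC); exact: h2.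
Qed.

Lemma K_card : #|K| = q.
Proof. by apply/eqP; rewrite eqn_leq K_card_le K_card_ge. Qed.
End KS3.

Lemma colorable_of (T C : finType) (e : rel T) (c : T -> C) (S : {set C}) n :
  (forall x, c x \in S) -> (forall x y, x != y -> e x y -> c x != c y) ->
  (#|S| <= n)%N -> colorable e n.
Proof.
move=> cS prop Sn; apply/existsP.
exists [ffun x => widen_ord Sn (enum_rank_in (cS x) (c x))].
apply/forallP => x; apply/forallP => y; apply/implyP => /andP [xy exy].
rewrite !ffunE; apply: contra (prop x y xy exy) => /eqP h.
have h' : enum_rank_in (cS x) (c x) = enum_rank_in (cS y) (c y).
  by apply: val_inj; move: h => /(congr1 val).
by rewrite -(enum_rankK_in (cS x) (cS x)) h' (enum_rankK_in (cS y) (cS y)).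
Qed.

Lemma chrom_le (T : finType) (e : rel T) n : colorable e n -> (chromatic_number e <= n)%N.
Proof. rewrite /chromatic_number; case: ex_minnP => m _ h; exact: h. Qed.

Definition rep (F : finFieldType) (K : {set F}) (x : F) : F :=
  [arg min_(y < x | y - x \in K) (enum_rank y : nat)].

Section Rep.
Context (F : finFieldType) (K : {set F}) (K0 : 0 \in K)
  (Kopp : forall x, x \in K -> - x \in K)
  (Kadd : forall x y, x \in K -> y \in K -> x + y \in K).

Lemma Ksub x y : x \in K -> y \in K -> x - y \in K.
Proof. by move=> hx hy; apply: Kadd => //; apply: Kopp. Qed.

Lemma rep_in x : rep K x - x \in K.
Proof.
rewrite /rep; case: arg_minnP => //; by rewrite subrr.
Qed.

Lemma rep_eq x y : x - y \in K -> rep K x = rep K y.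
Proof.
move=> hxy; rewrite /rep.
case: arg_minnP; first by rewrite subrr.
move=> a Pa mina.
case: arg_minnP; first by rewrite subrr.
move=> b Pb minb.
have ha : a - y \in K.
  rewrite (_ : a - y = (a - x) + (x - y)); last by ring.
  exact: Kadd.
have hb : b - x \in K.
  rewrite (_ : b - x = (b - y) - (x - y)); last by ring.
  exact: Ksub.
have := mina b hb; have := minb a ha => h1 h2.
by apply: enum_rank_inj; apply: val_inj; apply/eqP; rewrite eqn_leq h1 h2.
Qed.

Lemma rep_eqE x y : (rep K x == rep K y) = (x - y \in K).
Proof.
apply/eqP/idP => [h|]; last exact: rep_eq.
rewrite (_ : x - y = (rep K y - y) - (rep K x - x)); last by rewrite h; ring.
by apply: Ksub; apply: rep_in.
Qed.

Lemma rep_rep x : rep K (rep K x) = rep K x.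
Proof. by apply: rep_eq; apply: rep_in. Qed.
End Rep.

Section GCol.
Context (F : finFieldType) (p k : nat) (pc : p \in [pchar F]) (k0 : (0 < k)%N)
  (cardF : #|F| = ((p ^ k) ^ 3)%N) (two : (2 : F) != 0).
Local Notation q := (p ^ k)%N.
Local Notation K := (Kset F q).

Let K0 : 0 \in K := K_0 pc k0.
Let Kopp := @K_opp F p k pc.
Let Kadd := @K_add F p k pc.
Let rp := rep K.

Definition sg (g : F) : bool := (enum_rank (rp g) < enum_rank (rp (- g)))%N.

Definition gcol (v : F * F) : (F * bool) + (F * F) :=
  let x := v.1 in let g := v.2 - 2 * x ^+ 2 in
  if g \in K then inr (x - rp x, g) else inl (rp x, sg g).

Lemma adj_id (x y x2 y2 : F) : (x + y) ^+ 2 = x2 + y2 ->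
  (x2 - 2 * x ^+ 2) + (y2 - 2 * y ^+ 2) = - (x - y) ^+ 2.
Proof. move=> h; rewrite (_ : x2 - 2 * x ^+ 2 + (y2 - 2 * y ^+ 2) = (x2 + y2) - 2 * x ^+ 2 - 2 * y ^+ 2); last by ring.
rewrite -h; ring.
Qed.

Lemma K_half g : g + g \in K -> g \in K.
Proof.
move=> h; have K2 : (2 : F) \in K by apply: Kadd; exact: K_1.
rewrite (_ : g = (g + g) * 2^-1); first by apply: K_mul => //; apply: K_inv.
by field.
Qed.

Lemma gcol_prop v w : v != w -> G_adj v w -> gcol v != gcol w.
Proof.
case: v w => [x x2] [y y2] vw /andP [_ /eqP /adj_id hadj].
rewrite /gcol /=.
set g := x2 - 2 * x ^+ 2 in hadj *; set g' := y2 - 2 * y ^+ 2 in hadj *.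
case: ifP => gK; case: ifP => g'K //.
- apply/negP => /eqP [] e1 e2; subst g'.
  have hK : (x - y) ^+ 2 \in K.
    by rewrite -[_ ^+ 2]opprK -hadj; apply: Kopp; apply: Kadd.
  have := K_sq pc cardF hK; rewrite -(rep_eqE K0 Kopp Kadd) => /eqP er.
  have exy : x = y by move: e1; rewrite /rp er => /addIr.
  have ex2 : x2 = y2 by move: e2; rewrite /g exy => /addIr.
  by move: vw; rewrite exy ex2 eqxx.
- apply/negP => /eqP [] e1 e2.
  have hxy : x - y \in K by rewrite -(rep_eqE K0 Kopp Kadd) -/rp e1.
  have hs : g + g' \in K.
    by rewrite hadj; apply: Kopp; rewrite /= expr2; apply: K_mul.
  have r1 : rp g' = rp (- g).
    by apply: (rep_eq K0 Kopp Kadd); rewrite opprK addrC.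
  have r2 : rp (- g') = rp g.
    apply: (rep_eq K0 Kopp Kadd); rewrite (_ : - g' - g = - (g + g')); last by ring.
    exact: Kopp.
  move: e2; rewrite /sg r1 r2 => e2.
  have neq : rp g != rp (- g).
    apply: contraFN gK; rewrite (rep_eqE K0 Kopp Kadd) opprK => h.
    exact: K_half.
  have : (enum_rank (rp g) : nat) != enum_rank (rp (- g)).
    by apply: contra neq => /eqP /val_inj /enum_rank_inj ->.
  rewrite neq_ltn; move: e2.
  case: ltnP => h1; case: ltnP => h2 //=.
  by move: (ltn_trans h1 h2); rewrite ltnn.
Qed.

Lemma G_colorable : colorable (@G_adj F) (6 * q ^ 2)%N.
Proof.
pose R := [set r : F | rp r == r].
pose S := (inl @: setX R [set: bool]) :|: (@inr (F * bool) _ @: setX K K).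
have inS v : gcol v \in S.
  rewrite /gcol; case: ifP => gK; rewrite in_setU; apply/orP.
    right; apply: imset_f; rewrite inE /= gK andbT.
    rewrite (_ : v.1 - rp v.1 = - (rp v.1 - v.1)); last by ring.
    by apply: Kopp; apply: (rep_in K0).
  left; apply: imset_f; rewrite !inE /= andbT; apply/eqP.
  exact: (rep_rep K0 Kopp Kadd).
have cR : (#|R| * #|K| <= #|F|)%N.
  rewrite -cardsX.
  have inj : {in setX R K &, injective (fun rs : F * F => rs.1 + rs.2)}.
    move=> [r s] [r' s'] /=; rewrite !in_setX /= => /andP [hr hs] /andP [hr' hs'] e.
    move: hr hr'; rewrite !inE => /eqP hr /eqP hr'.
    have : r - r' \in K.
      have e' : r - r' = s' - s by rewrite -[r](addrK s) e; ring.
      rewrite e'; exact: (Ksub Kopp Kadd hs' hs).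
    rewrite -(rep_eqE K0 Kopp Kadd) -/rp hr hr' => /eqP er; subst r'.
    by move: e => /addrI ->.
  by rewrite -(card_in_imset inj) max_card.
have cS : (#|S| <= #|R| * 2 + #|K| * #|K|)%N.
  apply: (leq_trans (leq_card_setU _ _)); apply: leq_add.
    by rewrite card_imset ?cardsX ?cardsT ?card_bool //; move=> a b [].
  by rewrite card_imset ?cardsX //; move=> a b [].
have cK := K_card pc k0 cardF two.
have cR' : (#|R| * q <= q * q * q)%N.
  rewrite -q3E -cardF -cK. exact cR.
rewrite cK in cS.
apply: (colorable_of inS gcol_prop).
apply: (leq_trans cS).
have q0 : (0 < q)%N by rewrite expn_gt0 prime_gt0 ?(pcharf_prime pc).
have : (#|R| <= q * q)%N by rewrite -(leq_pmul2r q0).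
clear cR.
move=> h; rewrite expnS expn1.
nia.
Qed.
End GCol.

Lemma two_neq0 (F : finFieldType) p : p \in [pchar F] -> odd p -> (2 : F) != 0.
Proof.
move=> pc op; apply/negP => h; have : (p %| 2)%N by rewrite (dvdn_pcharf pc).
move/dvdn_leq => /(_ isT); have := prime_gt1 (pcharf_prime pc).
case: p pc op => [|[|[|]]] //.
Qed.

Lemma sum2sq (F : finFieldType) : odd #|F| -> exists a b : F, a ^+ 2 + b ^+ 2 = -1.
Proof.
move=> oF.
case: (boolP [exists a : F, exists b : F, a ^+ 2 + b ^+ 2 == -1]).
  by case/existsP => a /existsP [b /eqP h]; exists a, b.
rewrite negb_exists => /forallP nab.
pose A := [set x ^+ 2 | x : F].
pose B := (fun z : F => -1 - z) @: A.
have dAB : [disjoint A & B].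
  apply/pred0P => z /=; apply/negP => /andP [/imsetP [x _ ->] /imsetP [z' /imsetP [y _ ->] e]].
  have := nab x; rewrite negb_exists => /forallP /(_ y); rewrite e; apply/negP; rewrite negbK.
  by rewrite subrK.
have cB : #|B| = #|A|.
  apply: card_imset => z1 z2 /= e.
  by rewrite -(opprK z1) -(opprK z2) -[- z1](addKr (-1)) -[- z2](addKr (-1)) e.
have cAB : (#|A| + #|B| <= #|F|)%N.
  have [_ h] := leq_card_setU A B; rewrite dAB in h.
  by rewrite -(eqP h); exact: max_card.
pose f := fun x : F => (x ^+ 2, (enum_rank x < enum_rank (- x))%N).
have finj : injective f.
  move=> x y [] e2 eb.
  have : (x - y) * (x + y) = 0 by rewrite -subr_sqr e2 subrr.
  move/eqP; rewrite mulf_eq0 subr_eq0 => /orP [/eqP //|]; rewrite addr_eq0 => /eqP xy.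
  subst x; rewrite opprK in eb.
  have : (enum_rank (- y) : nat) = enum_rank y.
    by move: eb; case: ltngtP => // h1; case: ltngtP => // h2; move: (ltn_trans h1 h2); rewrite ltnn.
  by move/val_inj/enum_rank_inj.
have cF : (#|F| <= #|A| * 2)%N.
  have e1 : #|f @: [set: F]| = #|F| by rewrite card_imset // cardsT.
  have e2 : #|setX A [set: bool]| = (#|A| * 2)%N by rewrite cardsX cardsT card_bool.
  rewrite -e1 -e2.
  apply: subset_leq_card; apply/subsetP => z /imsetP [x _ ->].
  by rewrite in_setX /= in_setT andbT; apply: imset_f.
have : #|F| = (#|A| * 2)%N.
  by apply/eqP; rewrite eqn_leq cF muln2 -addnn; rewrite -{2}cB.
by move=> e; move: oF; rewrite e oddM andbF.
Qed.

Definition i0 : 'I_3 := @Ordinal 3 0 isT.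
Definition i1 : 'I_3 := @Ordinal 3 1 isT.
Definition i2 : 'I_3 := @Ordinal 3 2 isT.

Lemma dot3E (F : finFieldType) (u w : 'rV[F]_3) :
  dot3 u w = u 0 i0 * w 0 i0 + u 0 i1 * w 0 i1 + u 0 i2 * w 0 i2.
Proof.
rewrite /dot3 !big_ord_recl big_ord0 addr0 addrA.
by congr (_ + _ + _); congr (_ * _); congr (_ _ _); apply: val_inj.
Qed.

Lemma vec3_eq (F : finFieldType) (u w : 'rV[F]_3) :
  u 0 i0 = w 0 i0 -> u 0 i1 = w 0 i1 -> u 0 i2 = w 0 i2 -> u = w.
Proof.
move=> h0 h1 h2; apply/rowP => i.
case: i => [[|[|[|i]]] Hi] //.
- by rewrite (_ : Ordinal Hi = i0) //; apply: val_inj.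
- by rewrite (_ : Ordinal Hi = i1) //; apply: val_inj.
- by rewrite (_ : Ordinal Hi = i2) //; apply: val_inj.
Qed.

Definition repv (F : finFieldType) (A : ER_vertex F) : 'rV[F]_3 :=
  xchoose (existsP (valP A)).

Lemma repvP (F : finFieldType) (A : ER_vertex F) :
  repv A != 0 /\ val A = [set c *: repv A | c in F].
Proof.
have := xchooseP (existsP (valP A)); rewrite -/(repv A) => /andP [h1 /eqP h2].
by split.
Qed.

Lemma repv_in (F : finFieldType) (A : ER_vertex F) : repv A \in val A.
Proof. by case: (repvP A) => _ ->; apply/imsetP; exists 1; rewrite ?scale1r. Qed.

Lemma line_eq (F : finFieldType) (A B : ER_vertex F) (c : F) :
  c != 0 -> repv A = c *: repv B -> A = B.
Proof.
move=> c0 e; apply: val_inj.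
case: (repvP A) => _ ->; case: (repvP B) => _ ->; rewrite e.
apply/setP => x; apply/imsetP/imsetP => [[d _ ->]|[d _ ->]].
  by exists (d * c); rewrite ?scalerA.
by exists (d / c); rewrite // scalerA divfK.
Qed.

Section ERCol.
Context (F : finFieldType) (a b : F) (hab : a ^+ 2 + b ^+ 2 = -1) (two : (2 : F) != 0).

Definition Pf (u : 'rV[F]_3) := a * u 0 i0 + b * u 0 i1 + u 0 i2.
Definition Rf (u : 'rV[F]_3) := - a * u 0 i0 - b * u 0 i1 + u 0 i2.
Definition Sf (u : 'rV[F]_3) := - b * u 0 i0 + a * u 0 i1.

Lemma dot_id u w : 2 * dot3 u w = Pf u * Rf w + Rf u * Pf w - 2 * Sf u * Sf w.
Proof.
rewrite dot3E /Pf /Rf /Sf.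
have e : (u 0 i0 * w 0 i0 + u 0 i1 * w 0 i1) * (a ^+ 2 + b ^+ 2 + 1) = 0.
  by rewrite hab addNr mulr0.
rewrite -[LHS]subr0 -[X in _ - X](mulr0 2) -e; ring.
Qed.

Lemma lin0s (v0 v1 v2 : F) : a * v0 + b * v1 + v2 = 0 -> - b * v0 + a * v1 = 0 ->
  v0 = a * v2 /\ v1 = b * v2.
Proof.
move=> hP hS.
have e0 : v0 * (- (a ^+ 2 + b ^+ 2)) = a * v2 - a * (a * v0 + b * v1 + v2) + b * (- b * v0 + a * v1)
  by ring.
have e1 : v1 * (- (a ^+ 2 + b ^+ 2)) = b * v2 - b * (a * v0 + b * v1 + v2) - a * (- b * v0 + a * v1)
  by ring.
rewrite hab opprK mulr1 hP hS !mulr0 ?subr0 ?addr0 in e0 e1.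
by rewrite mulr1 in e1; split.
Qed.

Lemma lin0_zero (v0 v1 v2 : F) : a * v0 + b * v1 + v2 = 0 -> - b * v0 + a * v1 = 0 ->
  - a * v0 - b * v1 + v2 = 0 -> v0 = 0 /\ v1 = 0 /\ v2 = 0.
Proof.
move=> hP hS hR; have [e0 e1] := lin0s hP hS.
have v20 : v2 = 0.
  have : v2 * 2 = (a * v0 + b * v1 + v2) + (- a * v0 - b * v1 + v2) by ring.
  rewrite hP hR addr0.
  by move/eqP; rewrite mulf_eq0 (negbTE two) orbF => /eqP.
by rewrite e0 e1 v20 !mulr0.
Qed.

Lemma phi_adj (Pu Ru Su Pw Rw Sw : F) : Pu != 0 -> Pw != 0 ->
  0 = Pu * Rw + Ru * Pw - 2 * Su * Sw ->
  (Su / Pu + Sw / Pw) ^+ 2 = (Ru / Pu + (Su / Pu) ^+ 2) + (Rw / Pw + (Sw / Pw) ^+ 2).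
Proof.
move=> hu hw h.
have eRu : Ru = (2 * Su * Sw - Pu * Rw) / Pw.
  apply: (mulIf hw); rewrite divfK //; apply/eqP; rewrite -subr_eq0; apply/eqP.
  by rewrite h; ring.
rewrite eRu; field.
by rewrite hu hw.
Qed.

Lemma ratio_eq (Pu Xu Pw Xw : F) : Pu != 0 -> Pw != 0 -> Xu / Pu = Xw / Pw ->
  Pw * Xu - Pu * Xw = 0.
Proof.
move=> hu hw h; have -> : Xu = Xw / Pw * Pu by rewrite -h divfK.
by field.
Qed.

Lemma solve_lin (Pu Pw x y : F) : Pw != 0 -> Pw * x - Pu * y = 0 -> x = Pu / Pw * y.
Proof.
move=> hw /eqP; rewrite subr_eq0 => /eqP h; apply: (mulfI hw); rewrite h.
by field.
Qed.

Lemma scale_vec (u w : 'rV[F]_3) c :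
  u 0 i0 = c * w 0 i0 -> u 0 i1 = c * w 0 i1 -> u 0 i2 = c * w 0 i2 -> u = c *: w.
Proof. by move=> h0 h1 h2; apply: vec3_eq; rewrite mxE. Qed.

Lemma vec_zero (u : 'rV[F]_3) : u 0 i0 = 0 -> u 0 i1 = 0 -> u 0 i2 = 0 -> u = 0.
Proof. by move=> h0 h1 h2; apply: vec3_eq; rewrite mxE. Qed.
End ERCol.

Section ERCol2.
Context (F : finFieldType) (a b : F) (hab : a ^+ 2 + b ^+ 2 = -1) (two : (2 : F) != 0)
  (n : nat) (fG : {ffun F * F -> 'I_n})
  (fGp : forall x y, x != y -> G_adj x y -> fG x != fG y).

Local Notation P := (Pf a b).
Local Notation R := (Rf a b).
Local Notation S := (Sf a b).

Definition phi (u : 'rV[F]_3) : F * F := (S u / P u, R u / P u + (S u / P u) ^+ 2).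

Definition ecol (A : ER_vertex F) : 'I_n.+1 :=
  let u := repv A in
  if P u != 0 then widen_ord (leqnSn n) (fG (phi u))
  else if S u != 0 then ord_max else widen_ord (leqnSn n) (fG (0, 0)).

Lemma widen_neq_max (i : 'I_n) : widen_ord (leqnSn n) i != ord_max.
Proof. by apply/eqP => /(congr1 val) /= h; move: (ltn_ord i); rewrite h ltnn. Qed.

Lemma repv_zero (A : ER_vertex F) : P (repv A) = 0 -> S (repv A) = 0 -> R (repv A) = 0 -> False.
Proof.
move=> hP hS hR; have [h0 [h1 h2]] := lin0_zero hab two hP hS hR.
by case: (repvP A) => /negP nz _; apply: nz; apply/eqP; apply: vec_zero.
Qed.

Lemma iso_vec (A : ER_vertex F) : P (repv A) = 0 -> S (repv A) = 0 ->
  repv A = repv A 0 i2 *: (\row_(j < 3) [:: a; b; 1]`_j) /\ repv A 0 i2 != 0.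
Proof.
move=> hP hS; have [h0 h1] := lin0s hab hP hS.
have ne : repv A 0 i2 != 0.
  apply/eqP => h2; case: (repvP A) => /negP nz _; apply: nz; apply/eqP; apply: vec_zero => //.
    by rewrite h0 h2 mulr0.
  by rewrite h1 h2 mulr0.
split => //; apply: scale_vec; rewrite mxE /= ?h0 ?h1; ring.
Qed.

Lemma ecol_prop A B : A != B -> ER_adj A B -> ecol A != ecol B.
Proof.
move=> AB /andP [_ /forallP H].
have d0 : dot3 (repv A) (repv B) = 0.
  have := H (repv A) => /forallP /(_ (repv B)) /implyP; rewrite !repv_in => /(_ isT) /eqP //.
have idn := dot_id hab (repv A) (repv B); rewrite d0 mulr0 in idn.
rewrite /ecol /=.
set u := repv A in idn *; set w := repv B in idn *.
case: (eqVneq (P u) 0) => Pu; case: (eqVneq (P w) 0) => Pw.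
- rewrite /=.
  case: (eqVneq (S u) 0) => Su; case: (eqVneq (S w) 0) => Sw; rewrite ?Su ?Sw ?eqxx /=.
  + exfalso; have [eu nu] := iso_vec Pu Su; have [ew nw] := iso_vec Pw Sw.
    move/negP: AB; apply; apply/eqP.
    apply: (line_eq (c := u 0 i2 / w 0 i2)).
      by rewrite mulf_neq0 // invr_eq0.
    by rewrite /u /w {1}eu {2}ew scalerA divfK.
  + exact: widen_neq_max.
  + by rewrite eq_sym widen_neq_max.
  + exfalso; have : 2 * S u * S w != 0 by rewrite !mulf_neq0.
    move/eqP; apply; move: idn; rewrite Pu Pw !(mul0r, mulr0) add0r sub0r => /esym/eqP.
    by rewrite oppr_eq0 => /eqP.
- rewrite /=.
  case: (eqVneq (S u) 0) => Su; rewrite ?Su ?eqxx /=.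
    exfalso; apply: (@repv_zero A Pu Su).
    move: idn; rewrite Pu Su !(mul0r, mulr0) add0r subr0 => /esym/eqP.
    by rewrite mulf_eq0 (negbTE Pw) orbF => /eqP.
  by rewrite eq_sym widen_neq_max.
- rewrite /=.
  case: (eqVneq (S w) 0) => Sw; rewrite ?Sw ?eqxx /=.
    exfalso; apply: (@repv_zero B Pw Sw).
    move: idn; rewrite Pw Sw !(mul0r, mulr0) addr0 subr0 => /esym/eqP.
    by rewrite mulf_eq0 (negbTE Pu) /= => /eqP.
  exact: widen_neq_max.
- rewrite /=.
  have hne : phi u != phi w.
    apply/negP => /eqP [e1 e2]; rewrite e1 in e2; move/addIr in e2.
    have hP' : a * (P w * u 0 i0 - P u * w 0 i0) + b * (P w * u 0 i1 - P u * w 0 i1)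
               + (P w * u 0 i2 - P u * w 0 i2) = 0.
      rewrite (_ : _ + _ = P w * P u - P u * P w); last by rewrite /Pf; ring.
      by rewrite mulrC subrr.
    have hS' : - b * (P w * u 0 i0 - P u * w 0 i0) + a * (P w * u 0 i1 - P u * w 0 i1) = 0.
      rewrite -(ratio_eq Pu Pw e1) /Sf; ring.
    have hR' : - a * (P w * u 0 i0 - P u * w 0 i0) - b * (P w * u 0 i1 - P u * w 0 i1)
               + (P w * u 0 i2 - P u * w 0 i2) = 0.
      rewrite -(ratio_eq Pu Pw e2) /Rf; ring.
    have [z0 [z1 z2]] := lin0_zero hab two hP' hS' hR'.
    move/negP: AB; apply; apply/eqP.
    apply: (line_eq (c := P u / P w)); first by rewrite mulf_neq0 // invr_eq0.
    by apply: scale_vec; apply: solve_lin.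
  have hadj : G_adj (phi u) (phi w).
    rewrite /G_adj hne /=; apply/eqP; exact: phi_adj Pu Pw idn.
  apply: contra (fGp hne hadj) => /eqP h; apply/eqP; apply: val_inj.
  by move: (congr1 val h).
Qed.
End ERCol2.

Local Close Scope ring_scope.

Theorem theorem5p1 (p k : nat) (F : finFieldType) :
  prime p -> odd p -> (0 < k)%N -> #|F| = ((p ^ k) ^ 3)%N ->
  (chromatic_number (@G_adj F) <= 6 * (p ^ k) ^ 2)%N /\
  (chromatic_number (@ER_adj F) <= 6 * (p ^ k) ^ 2 + 1)%N.
Proof.
move=> pp op k0 cF.
have pc : (p \in [pchar F])%R by apply: (card_finPcharP (n := (k * 3)%N)) => //; rewrite expnM.
have two := two_neq0 pc op.
have Gc := G_colorable pc k0 cF two.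
split; first exact: chrom_le.
have [a [b hab]] : exists a b : F, (a ^+ 2 + b ^+ 2 = -1)%R.
  by apply: sum2sq; rewrite cF !oddX op !orbT.
case/existsP: Gc => fG /forallP fGp'.
have fGp : forall x y, x != y -> G_adj x y -> fG x != fG y.
  by move=> x y xy exy; move: (fGp' x) => /forallP /(_ y) /implyP; apply; rewrite xy.
apply: chrom_le; rewrite addn1; apply/existsP.
exists [ffun A => ecol a b fG A].
apply/forallP => A; apply/forallP => B; apply/implyP => /andP [AB adj].
by rewrite !ffunE; apply: (ecol_prop hab two fGp).
Qed.
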